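(* Let $\mathcal{H}$ be a Hilbert space of dimension $d$ with $2 \le d < \infty$, let $X$ be a set with $d^2$ elements, and let $\mathbf{U}=\{U_x : x\in X\}$ and $\mathbf{U}'=\{U'_x : x \in X\}$ be unitary bases for $\mathcal{H}$. Then the following are equivalent: (i) $\mathbf{U}$ is equivalent to $\mathbf{U}'$; (ii) for some $\mathbf{U}$-associated tag $\mathbf{T}=(x_0,U_{x_0},\mathbf{W})$ and some $\mathbf{U}'$-associated tag $\mathbf{T}'=(x_0',U'_{x_0'},\mathbf{W}')$, the unitary system $\mathbf{W}$ is collectively unitarily equivalent to $\mathbf{W}'$; (iii) for each $\mathbf{U}$-associated tag $\mathbf{T}=(x_0,U_{x_0},\mathbf{W})$ there is a $\mathbf{U}'$-associated tag $\mathbf{T}'=(x_0',U'_{x_0'},\mathbf{W}')$ such that $\mathbf{W}$ is collectively unitarily equivalent to $\mathbf{W}'$.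
   Context: $\mathcal{U}(\mathcal{H})$ denotes the unitaries on $\mathcal{H}$. A unitary basis (UB) is a family $\mathbf{U}=\{U_x: x\in X\}$ of unitaries on $\mathcal{H}$ with $\operatorname{tr}(U_x^*U_y)=d\,\delta_{xy}$ for $x,y\in X$. Two unitary bases $\mathbf{U}$, $\mathbf{U}'$ are equivalent if there exist unitaries $V_1,V_2$ on $\mathcal{H}$ and a bijection (relabelling) $x\mapsto x'$ of $X$ such that $U'_{x'}=V_1U_xV_2$ for all $x\in X$. For $x_0\in X$, the $\mathbf{U}$-associated tag at $x_0$ is the triple $(x_0,U_{x_0},\mathbf{W})$ where $\mathbf{W}=\{W_x=U_{x_0}^*U_x : x\in X, x\neq x_0\}$ (a set of unitaries). For subsets $\mathcal{F},\mathcal{G}$ of bounded operators on $\mathcal{H}$, $\mathcal{F}$ is collectively unitarily equivalent (CUE) to $\mathcal{G}$ if there is a unitary $V$ on $\mathcal{H}$ with $\mathcal{G}=\{V^*AV : A\in\mathcal{F}\}$. *)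

(* Defs.v *)
(* The Hilbert space H of dimension d is modelled as C^d with
   C = R[i] (complex numbers over a realType R); operators are 'M[C]_d. *)
From HB Require Import structures.
From mathcomp Require Import all_boot all_order all_algebra.
From mathcomp Require Import reals complex.
Set Implicit Arguments. Unset Strict Implicit. Unset Printing Implicit Defensive.
Import Order.TTheory GRing.Theory Num.Theory.
Local Open Scope ring_scope.

Section Defs.
Variable C : numClosedFieldType.
Variable d : nat.

Definition adjmx (A : 'M[C]_d) : 'M[C]_d := (map_mx Num.conj A)^T.

Definition unitary (U : 'M[C]_d) : Prop :=
  adjmx U *m U = 1%:M /\ U *m adjmx U = 1%:M.

Definition unitary_basis (X : finType) (U : X -> 'M[C]_d) : Prop :=
  (forall x, unitary (U x)) /\
  (forall x y, \tr (adjmx (U x) *m U y) = d%:R * (x == y)%:R).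

Definition ub_equiv (X : finType) (U U' : X -> 'M[C]_d) : Prop :=
  exists (V1 V2 : 'M[C]_d) (s : X -> X),
    [/\ unitary V1, unitary V2, bijective s &
        forall x, U' (s x) = V1 *m U x *m V2].

Definition tagW (X : finType) (U : X -> 'M[C]_d) (x0 : X) : 'M[C]_d -> Prop :=
  fun A => exists x, x != x0 /\ A = adjmx (U x0) *m U x.

Definition CUE (F G : 'M[C]_d -> Prop) : Prop :=
  exists V : 'M[C]_d, unitary V /\
    (forall B, G B <-> exists A, F A /\ B = adjmx V *m A *m V).
End Defs.

(* Main.v *)
Require Import Defs.
From HB Require Import structures.
From mathcomp Require Import all_boot all_order all_algebra.
From mathcomp Require Import reals complex.
Import Order.TTheory GRing.Theory Num.Theory.
Local Open Scope ring_scope.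

Section Aux.
Variable C : numClosedFieldType.
Variable d : nat.
Implicit Types A B : 'M[C]_d.

Lemma adjmxM A B : adjmx (A *m B) = adjmx B *m adjmx A.
Proof. by rewrite /adjmx map_mxM trmx_mul. Qed.

Lemma adjmxK A : adjmx (adjmx A) = A.
Proof. by apply/matrixP=> i j; rewrite /adjmx !mxE conjCK. Qed.

Lemma unitary_adj A : unitary A -> unitary (adjmx A).
Proof. by case=> h1 h2; rewrite /unitary adjmxK. Qed.

Lemma unitaryM A B : unitary A -> unitary B -> unitary (A *m B).
Proof.
case=> hA1 hA2 [hB1 hB2]; split; rewrite adjmxM.
  by rewrite -!mulmxA (mulmxA (adjmx A) A) hA1 mul1mx hB1.
by rewrite -!mulmxA (mulmxA B) hB2 mul1mx hA2.
Qed.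
Lemma canc_lem W1 W2 A : unitary W1 -> unitary W2 ->
  adjmx W1 *m (W1 *m A *m W2) *m adjmx W2 = A.
Proof.
case=> h1 _ [_ h2]; rewrite -!mulmxA (mulmxA (adjmx W1)) h1 mul1mx.
by rewrite h2 mulmx1.
Qed.
End Aux.

Theorem theorem2p7 (R : realType) (d : nat) (X : finType)
    (U U' : X -> 'M[R[i]]_d) :
  (2 <= d)%N -> #|X| = (d ^ 2)%N ->
  unitary_basis U -> unitary_basis U' ->
  (ub_equiv U U' <->
     exists x0 x0' : X, CUE (tagW U x0) (tagW U' x0')) /\
  (ub_equiv U U' <->
     forall x0 : X, exists x0' : X, CUE (tagW U x0) (tagW U' x0')).
Proof.
move=> d2 cX [uU oU] [uU' oU'].
have i_iii : ub_equiv U U' ->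
    forall x0 : X, exists x0' : X, CUE (tagW U x0) (tagW U' x0').
  case=> V1 [V2] [s] [uV1 uV2 sbij hU] x0.
  have [g sg gs] := sbij.
  have key : forall x, adjmx (U' (s x0)) *m U' (s x)
      = adjmx V2 *m (adjmx (U x0) *m U x) *m V2.
    move=> x; rewrite !hU !adjmxM -!mulmxA (mulmxA (adjmx V1) V1) uV1.1 mul1mx.
    by rewrite !mulmxA.
  exists (s x0), V2; split=> // B; split.
    case=> y [ny ->]; exists (adjmx (U x0) *m U (g y)); split.
      exists (g y); split=> //; apply: contra ny => /eqP <-; by rewrite gs.
    by rewrite -key gs.
  case=> A [[x [nx ->]] ->]; exists (s x); split; last by rewrite key.
  by rewrite (bij_eq sbij).
have iii_ii : (forall x0 : X, exists x0' : X, CUE (tagW U x0) (tagW U' x0')) ->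
    exists x0 x0' : X, CUE (tagW U x0) (tagW U' x0').
  move=> h; have : (0 < #|X|)%N by by rewrite cX expn_gt0 (leq_trans _ d2).
  case/card_gt0P=> x0 _; have [x0' ?] := h x0; by exists x0, x0'.
have ii_i : (exists x0 x0' : X, CUE (tagW U x0) (tagW U' x0')) -> ub_equiv U U'.
  case=> x0 [x0'] [V [uV H]].
  pose V1 := U' x0' *m adjmx V *m adjmx (U x0).
  have ex : forall x, exists y, U' y = V1 *m U x *m V.
    move=> x; case: (eqVneq x x0) => [->|nx].
      exists x0'; rewrite /V1 -!mulmxA (mulmxA (adjmx (U x0))) (uU x0).1 mul1mx.
      by rewrite uV.1 mulmx1.
    have [] := (H (adjmx V *m (adjmx (U x0) *m U x) *m V)).2.
      by exists (adjmx (U x0) *m U x); split=> //; exists x.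
    move=> y [_ hy]; exists y.
    rewrite -[U' y]mul1mx -(uU' x0').2.
    by rewrite -(mulmxA (U' x0')) -hy /V1 !mulmxA.
  pose s x := odflt x [pick y | U' y == V1 *m U x *m V].
  have hs : forall x, U' (s x) = V1 *m U x *m V.
    move=> x; rewrite /s; case: pickP => [y /eqP //|none].
    by have [y hy] := ex x; move: (none y); rewrite hy eqxx.
  have uV1 : unitary V1 by apply: unitaryM; [apply: unitaryM|];
    [apply: uU'|apply: unitary_adj|apply: unitary_adj; apply: uU].
  have sinj : injective s.
    move=> x x' e.
    have eU : U x = U x'.
      have canc : forall A, adjmx V1 *m (V1 *m A *m V) *m adjmx V = A.
        by move=> A; apply: canc_lem.
      have e2 : V1 *m U x *m V = V1 *m U x' *m V by rewrite -hs -hs e.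
      by rewrite -(canc (U x)) e2 canc.
    have := oU x x'; rewrite -eU oU eqxx.
    case: (eqVneq x x') => [-> _|_]; first by [].
    move/eqP; rewrite mulr0 mulr1 pnatr_eq0.
    by move=> /eqP d0; rewrite d0 in d2.
  exists V1, V, s; split=> //; exact: injF_bij.
split; split.
- by move=> h; apply: iii_ii; apply: i_iii.
- exact: ii_i.
- exact: i_iii.
- by move=> h; apply: ii_i; apply: iii_ii.
Qed.
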